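(* For every $N\in\omega$ there are sets $F_1,\dots,F_{2^N}\in\mathcal{S}$ such that the vector $x=\sum_{j=1}^{2^N}\chi_{F_j}$ satisfies: (1) $x(i)\in\{2^r: r=0,\dots,N\}$ for every $i\in\mathrm{supp}(x)$; (2) $\phi(A_r)\ge 2^{N-r}$ for every $r=0,\dots,N$, where $A_r=\{i\in\omega: x(i)=2^r\}$.
   Context: $\omega=\{1,2,3,\dots\}$. The Schreier family is $\mathcal{S}=\{A\subseteq\omega: |A|\le\min(A)\}$ (including $\emptyset$). For finite $A,B\subseteq\omega$, $A<B$ means $\max A<\min B$. For a finite $A\subseteq\omega$, $\phi(A)$ is the minimal number $m$ such that $A=B_1\cup\dots\cup B_m$ with $B_1<B_2<\dots<B_m$ and each $B_i\in\mathcal{S}$ (the minimal number of consecutive Schreier sets covering $A$). $\chi_F$ is the characteristic function of $F$ and $\mathrm{supp}(x)=\{i:x(i)\neq0\}$. *)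

(* Defs.v *)
From mathcomp Require Import all_boot.
From mathcomp Require Import boolp.
Set Implicit Arguments. Unset Strict Implicit. Unset Printing Implicit Defensive.

(* Finite subsets of omega = {1,2,...} are represented by duplicate-free
   lists of natural numbers. *)

Definition schreier (A : seq nat) : Prop :=
  [/\ uniq A, all (fun a => 0 < a) A & forall a, a \in A -> size A <= a].

Definition successive (Bs : seq (seq nat)) : Prop :=
  forall k l, k < l < size Bs ->
    forall a b, a \in nth [::] Bs k -> b \in nth [::] Bs l -> a < b.

Definition schreier_decomp (A : nat -> Prop) (Bs : seq (seq nat)) : Prop :=
  [/\ forall B, B \in Bs -> schreier B,
      successive Bs &
      forall i, A i <-> has (fun B => i \in B) Bs].

Definition decomposable (A : nat -> Prop) (m : nat) : Prop :=
  exists Bs, schreier_decomp A Bs /\ size Bs = m.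

(* phi(A): the minimal number of successive Schreier sets covering A
   (0 by convention if no such decomposition exists, which never happens
   for finite A ⊆ ω). *)
Definition phi (A : nat -> Prop) : nat :=
  match pselect (exists m, `[< decomposable A m >]) with
  | left h => ex_minn h
  | right _ => 0
  end.

(* Main.v *)
Require Import Defs.
From mathcomp Require Import all_boot.
From mathcomp Require Import boolp.
From mathcomp Require Import zify.

Definition X (L : seq (seq nat)) (i : nat) : nat := \sum_(F <- L) (i \in F).

Definition gap (A : nat -> Prop) lo d := exists S : seq nat,
  [/\ uniq S, lo <= size S & forall y, y \in S -> lo < y <= d /\ A y].

Fixpoint chainP (A : nat -> Prop) lo ds : Prop :=
  match ds with
  | [::] => True
  | d :: ds' => [/\ A d, gap A lo d & chainP A d ds']
  end.

Lemma gap_mono (A A' : nat -> Prop) lo lo' d :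
  (forall y, A y -> A' y) -> lo' <= lo -> gap A lo d -> gap A' lo' d.
Proof.
move=> HA hl [S [uS szS HS]]; exists S; split=> //; first lia.
move=> y /HS [/andP [h1 h2] Ay]; split; last exact: HA.
apply/andP; split=> //; lia.
Qed.

Lemma chainP_mono (A A' : nat -> Prop) lo lo' ds :
  (forall y, A y -> A' y) -> lo' <= lo -> chainP A lo ds -> chainP A' lo' ds.
Proof.
move=> HA; case: ds => [//|d ds] hl /= [Ad Hg Hc]; split.
- exact: HA.
- exact: gap_mono Hg.
- elim: ds d Hc {Ad Hg} => [//|d' ds IH] d /= [Ad Hg Hc]; split.
  + exact: HA.
  + exact: gap_mono Hg.
  + exact: IH.
Qed.

Lemma chainP_cat A lo ds1 ds2 :
  chainP A lo ds1 -> chainP A (last lo ds1) ds2 -> chainP A lo (ds1 ++ ds2).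
Proof.
elim: ds1 lo => [//|d ds IH] lo /= [Ad Hg Hc] H2; split=> //; exact: IH.
Qed.

Lemma chainP_all A lo ds : chainP A lo ds -> forall d, d \in ds -> A d.
Proof.
elim: ds lo => [//|d ds IH] lo /= [Ad _ Hc] y; rewrite inE => /orP [/eqP -> //|].
exact: (IH d Hc).
Qed.

Lemma blk_exists A Bs d : schreier_decomp A Bs -> A d ->
  exists2 k, k < size Bs & d \in nth [::] Bs k.
Proof.
case=> _ _ H Ad; have /hasP [B BBs dB] := proj1 (H d) Ad.
by exists (index B Bs); [rewrite index_mem | rewrite nth_index].
Qed.

Lemma key A Bs d d' k k' : schreier_decomp A Bs -> gap A d d' ->
  k < size Bs -> d \in nth [::] Bs k -> k' < size Bs -> d' \in nth [::] Bs k' -> k < k'.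
Proof.
move=> HD [S [uS szS HS]] kB dk k'B d'k'.
have HD' := HD; case: HD' => Hs Hsucc Hcov.
have [uB posB szB] := Hs _ (mem_nth [::] kB).
have d0 : 0 < d by move/allP: posB => /(_ d dk).
have dd' : d < d'.
  case: S uS szS HS => [|y S'] _ szS HS; first by rewrite /= in szS; lia.
  by have [/andP [h1 h2] _] := HS y (mem_head _ _); lia.
case: (ltngtP k k') => // hk.
- have := Hsucc k' k; rewrite hk kB => /(_ isT d' d d'k' dk); lia.
- subst k'.
  have sub : {subset d :: S <= nth [::] Bs k}.
    move=> y; rewrite inE => /orP [/eqP -> //|yS].
    have [/andP [h1 h2] Ay] := HS y yS.
    have [ky kyB yky] := @blk_exists _ _ _ HD Ay.
    case: (ltngtP ky k) => hky.
    + have := Hsucc ky k; rewrite hky kB => /(_ isT y d yky dk); lia.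
    + have := Hsucc k ky; rewrite hky kyB => /(_ isT d' y d'k' yky); lia.
    + by rewrite -hky.
  have u : uniq (d :: S).
    rewrite /= uS andbT; apply/negP => dS.
    by have [/andP [h1 _] _] := HS d dS; lia.
  have := uniq_leq_size u sub; have := szB d dk; rewrite /=; lia.
Qed.

Lemma chain_bound A Bs lo ds : schreier_decomp A Bs -> chainP A lo ds ->
  size ds <= size Bs.
Proof.
move=> HD.
have aux : forall ds0 d lo, chainP A lo (d :: ds0) -> forall k, k < size Bs ->
    d \in nth [::] Bs k -> k + size (d :: ds0) <= size Bs.
  elim=> [|d' ds0 IH] d lo0 /=; first by move=> _ k kB _; lia.
  move=> [Ad Hg [Ad' Hg' Hc]] k kB dk.
  have [k' k'B d'k'] := @blk_exists _ _ _ HD Ad'.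
  have := @key _ _ _ _ _ _ HD Hg' kB dk k'B d'k'.
  have := IH d' d (And3 Ad' Hg' Hc) k' k'B d'k'; rewrite /=; lia.
case: ds => [|d ds] /=; first by [].
move=> Hc; have [Ad _ _] := Hc.
have [k kB dk] := @blk_exists _ _ _ HD Ad.
have := aux ds d lo Hc k kB dk; rewrite /=; lia.
Qed.

Lemma phi_ge A lo ds : (exists m, decomposable A m) -> chainP A lo ds ->
  size ds <= phi A.
Proof.
move=> Hex Hc; rewrite /phi; case: pselect => [h|hn].
- case: ex_minnP => m /asboolP [Bs [HBs <-]] _; exact: chain_bound Hc.
- exfalso; apply: hn; case: Hex => m Hm; exists m; exact/asboolP.
Qed.

Lemma decomp_ex (A : nat -> Prop) (p : pred nat) b :
  (forall i, A i <-> [/\ 0 < i, i <= b & p i]) -> exists m, decomposable A m.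
Proof.
move=> HA.
set s := [seq i <- iota 1 b | p i].
set Bs := [seq [:: i] | i <- s].
exists (size Bs), Bs; split=> //; split.
- move=> B /mapP [i]; rewrite mem_filter mem_iota => /andP [_ /andP [h1 _]] ->.
  split=> //=; first by rewrite andbT.
  by move=> a; rewrite inE => /eqP ->.
- move=> k l /andP [kl lB] a c.
  have kB : k < size s by rewrite size_map in lB; lia.
  have lB' : l < size s by rewrite size_map in lB.
  rewrite (nth_map 0) // (nth_map 0) // !inE => /eqP -> /eqP ->.
  have so : sorted ltn s by apply: sorted_filter; [exact: ltn_trans|exact: iota_ltn_sorted].
  exact: (sorted_ltn_nth ltn_trans 0 so).
- move=> i; apply: iff_trans (HA i) _; split.
  + case=> h1 h2 h3; apply/hasP; exists [:: i]; last by rewrite inE.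
    apply/map_f; rewrite mem_filter h3 mem_iota /=; lia.
  + move/hasP => [B /mapP [j]]; rewrite mem_filter mem_iota => /andP [pj hj] -> .
    rewrite inE => /eqP ->; split=> //; lia.
Qed.

Lemma X_cons (F : seq nat) (L : seq (seq nat)) (i : nat) : X (F :: L) i = (i \in F) + X L i.
Proof. by rewrite /X big_cons. Qed.

Lemma X_cat (L1 L2 : seq (seq nat)) (i : nat) : X (L1 ++ L2) i = X L1 i + X L2 i.
Proof. by rewrite /X big_cat. Qed.

Lemma X_eq0 (L : seq (seq nat)) (i : nat) : (forall F, F \in L -> i \notin F) -> X L i = 0.
Proof.
move=> H; rewrite /X big1_seq // => F /andP [_ FL].
by rewrite (negbTE (H F FL)).
Qed.

Lemma X_neq0 (L : seq (seq nat)) (i : nat) : X L i != 0 -> exists2 F, F \in L & i \in F.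
Proof.
case: (boolP (has (fun F => i \in F) L)) => [/hasP [F FL iF] _|/hasPn H].
- by exists F.
- by rewrite X_eq0.
Qed.

Lemma X_mapcat (L : seq (seq nat)) (T : seq nat) (i : nat) : (forall F, F \in L -> i \in T -> i \notin F) ->
  X [seq F ++ T | F <- L] i = if i \in T then size L else X L i.
Proof.
move=> H; rewrite /X big_map; case: ifP => iT.
- rewrite -sum1_size; apply: eq_big_seq => F FL; by rewrite mem_cat iT orbT.
- apply: eq_bigr => F _; by rewrite mem_cat iT orbF.
Qed.

Fixpoint build (N a s : nat) : seq (seq nat) * nat :=
  match N with
  | 0 => ([:: iota (a + s + 1) a.+1], a + s + 1 + a)
  | N'.+1 =>
    let p1 := build N' a (s + a.+1) in
    let p2 := build N' p1.2 (s + a.+1) in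
    ([seq F ++ iota p2.2.+1 a.+1 | F <- p1.1 ++ p2.1], p2.2 + a.+1)
  end.

Record Inv (N a s : nat) (L : seq (seq nat)) (b : nat) : Prop := {
  i_size : size L = 2 ^ N;
  i_uniq : forall F, F \in L -> uniq F;
  i_szb : forall F, F \in L -> size F + s <= b;
  i_elt : forall F y, F \in L -> y \in F -> [/\ a < y, y <= b & size F + s <= y];
  i_ab : a < b;
  i_val : forall i, X L i != 0 -> exists2 r, r <= N & X L i = 2 ^ r;
  i_chain : forall r, r <= N -> exists ds, size ds = 2 ^ (N - r) /\
     chainP (fun i => 0 < i /\ X L i = 2 ^ r) a ds }.
Arguments i_size {N a s L b}.
Arguments i_uniq {N a s L b} _ {F}.
Arguments i_szb {N a s L b} _ {F}.
Arguments i_elt {N a s L b} _ {F y}.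
Arguments i_ab {N a s L b}.
Arguments i_val {N a s L b} _ {i}.
Arguments i_chain {N a s L b} _ {r}.

Lemma X_range N a s L b i : Inv N a s L b -> X L i != 0 -> a < i <= b.
Proof.
move=> I /X_neq0 [F FL iF]; have [h1 h2 _] := i_elt I FL iF; lia.
Qed.

Arguments X_range {N a s L b i}.

Lemma build_inv N : forall a s, Inv N a s (build N a s).1 (build N a s).2.
Proof.
elim: N => [|N IH] a s.
- change (Inv 0 a s [:: iota (a+s+1) a.+1] (a+s+1+a)).
  have Xv : forall i, X [:: iota (a + s + 1) a.+1] i = (i \in iota (a + s + 1) a.+1).
    by move=> i; rewrite X_cons /X big_nil addn0.
  split=> //.
  + by move=> F; rewrite inE => /eqP ->; exact: iota_uniq.
  + by move=> F; rewrite inE => /eqP ->; rewrite size_iota; lia.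
  + move=> F y; rewrite inE => /eqP -> ; rewrite mem_iota size_iota => h; split; lia.
  + lia.
  + move=> i; rewrite Xv; case: (i \in _) => // _; by exists 0.
  + move=> r; rewrite leqn0 => /eqP ->; exists [:: a + s + 1 + a]; split=> //=.
    have hT : a + s + 1 + a \in iota (a + s + 1) a.+1 by rewrite mem_iota; lia.
    split=> //; first by rewrite Xv hT; split=> //; lia.
    exists (iota (a + s + 1) a.+1); split.
    * exact: iota_uniq.
    * rewrite size_iota; lia.
    * move=> y hy; rewrite Xv hy; move: hy; rewrite mem_iota => hy; split; lia.
- change (Inv N.+1 a s [seq F ++ iota (build N (build N a (s + a.+1)).2 (s + a.+1)).2.+1 a.+1 | F <- (build N a (s + a.+1)).1 ++ (build N (build N a (s + a.+1)).2 (s + a.+1)).1] ((build N (build N a (s + a.+1)).2 (s + a.+1)).2 + a.+1)).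
  set p1 := build N a (s + a.+1).
  set p2 := build N p1.2 (s + a.+1).
  set T := iota p2.2.+1 a.+1.
  have I1 : Inv N a (s + a.+1) p1.1 p1.2 by exact: IH.
  have I2 : Inv N p1.2 (s + a.+1) p2.1 p2.2 by exact: IH.
  have ab1 := i_ab I1; have b12 := i_ab I2.
  have memT : forall y, y \in T -> p2.2 < y <= p2.2 + a.+1.
    by move=> y; rewrite mem_iota; lia.
  have eltL : forall F y, F \in p1.1 ++ p2.1 -> y \in F ->
      [/\ a < y, y <= p2.2 & size F + (s + a.+1) <= y].
    move=> F y; rewrite mem_cat => /orP [FL|FL] yF.
    + have [h1 h2 h3] := i_elt I1 FL yF; split=> //; lia.
    + have [h1 h2 h3] := i_elt I2 FL yF; split=> //; lia.
  have szbL : forall F, F \in p1.1 ++ p2.1 -> size F + (s + a.+1) <= p2.2.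
    move=> F; rewrite mem_cat => /orP [FL|FL].
    + have := i_szb I1 FL; lia.
    + have := i_szb I2 FL; lia.
  have XE : forall i, X [seq F ++ T | F <- p1.1 ++ p2.1] i =
      if i \in T then 2 ^ N.+1 else X p1.1 i + X p2.1 i.
    move=> i; rewrite X_mapcat.
    + by rewrite size_cat (i_size I1) (i_size I2) expnS mul2n addnn X_cat.
    + move=> F FL /memT h; apply/negP => iF; have [_ h2 _] := eltL F i FL iF; lia.
  have X1 : forall i, X p1.1 i != 0 -> X [seq F ++ T | F <- p1.1 ++ p2.1] i = X p1.1 i.
    move=> i h; have /andP [h1 h2] := X_range I1 h.
    rewrite XE; case: ifP => [/memT|_]; first lia.
    rewrite (@X_eq0 p2.1) ?addn0 // => F FL; apply/negP => iF.
    have [h3 _ _] := i_elt I2 FL iF; lia.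
  have X2 : forall i, X p2.1 i != 0 -> X [seq F ++ T | F <- p1.1 ++ p2.1] i = X p2.1 i.
    move=> i h; have /andP [h1 h2] := X_range I2 h.
    rewrite XE; case: ifP => [/memT|_]; first lia.
    rewrite (@X_eq0 p1.1) ?add0n // => F FL; apply/negP => iF.
    have [_ h3 _] := i_elt I1 FL iF; lia.
  split.
  + by rewrite size_map size_cat (i_size I1) (i_size I2) expnS mul2n addnn.
  + move=> G /mapP [F FL ->]; rewrite cat_uniq iota_uniq andbT.
    apply/andP; split.
    * by move: FL; rewrite mem_cat => /orP [FL|FL]; [apply: (i_uniq I1 FL)|apply: (i_uniq I2 FL)].
    * apply/hasPn => y /memT hy; apply/negP => yF; have [_ h _] := eltL F y FL yF; lia.
  + move=> G /mapP [F FL ->]; rewrite size_cat size_iota; have := szbL F FL; lia.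
  + move=> G y /mapP [F FL ->]; rewrite mem_cat size_cat size_iota => /orP [yF|yT].
    * have [h1 h2 h3] := eltL F y FL yF; split; lia.
    * have := memT y yT; have := szbL F FL; split; lia.
  + lia.
  + move=> i; rewrite XE; case: ifP => iT.
    * by move=> _; exists N.+1.
    * move=> h; case: (boolP (X p1.1 i == 0)) => [/eqP h1|h1].
      - rewrite h1 add0n in h *; have [r hr ->] := i_val I2 h; exists r => //; lia.
      - have := X1 i h1; rewrite XE iT => ->; have [r hr ->] := i_val I1 h1; exists r => //; lia.
  + move=> r; rewrite leq_eqVlt => /orP [/eqP ->|hr].
    * exists [:: p2.2 + a.+1]; rewrite subnn; split=> //=.
      have hT : p2.2 + a.+1 \in T by rewrite mem_iota; lia.
      split=> //; first by rewrite XE hT; split=> //; lia.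
      exists T; split.
      -- exact: iota_uniq.
      -- rewrite size_iota; lia.
      -- move=> y hy; rewrite XE hy; have := memT y hy; split=> //; lia.
    * have hr' : r <= N by lia.
      have [ds1 [sz1 c1]] := i_chain I1 hr'.
      have [ds2 [sz2 c2]] := i_chain I2 hr'.
      exists (ds1 ++ ds2); split.
      -- by rewrite size_cat sz1 sz2 subSn // expnS mul2n addnn.
      -- apply: chainP_cat.
         ++ apply: chainP_mono c1 => //; move=> y [y0 hy]; split=> //.
            by rewrite X1 // hy expn_eq0.
         ++ apply: (@chainP_mono _ _ p1.2 (last a ds1) ds2 _ _ c2).
            ** move=> y [y0 hy]; split=> //; by rewrite X2 // hy expn_eq0.
            ** have : last a ds1 \in a :: ds1 by exact: mem_last.
               rewrite inE => /orP [/eqP ->|hl]; first lia.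
               have [_ hx] := @chainP_all _ _ _ c1 _ hl.
               have hx' : X p1.1 (last a ds1) != 0 by rewrite hx expn_eq0.
               by have /andP [] := X_range I1 hx'.
Qed.

Theorem mainTheorem13 (N : nat) (hN : 0 < N) :
  exists F : 'I_(2 ^ N) -> seq nat,
    (forall j, schreier (F j)) /\
    let x := fun i : nat => (\sum_(j < 2 ^ N) (i \in F j))%N in
    (forall i, x i != 0 -> exists2 r, r <= N & x i = 2 ^ r) /\
    (forall r, r <= N -> 2 ^ (N - r) <= phi (fun i => 0 < i /\ x i = 2 ^ r)).
Proof.
have I := build_inv N 0 0.
set L := (build N 0 0).1 in I; set b := (build N 0 0).2 in I.
exists (fun j => nth [::] L j); split.
- move=> j; have jL : nth [::] L j \in L by apply: mem_nth; rewrite (i_size I).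
  split; first exact: (i_uniq I jL).
  + apply/allP => y yF; by have [h _ _] := i_elt I jL yF.
  + move=> y yF; have [_ _ h] := i_elt I jL yF; by rewrite addn0 in h.
- move=> x.
  have xE : forall i, x i = X L i.
    by move=> i; rewrite /x /X (big_nth [::]) (i_size I) big_mkord.
  split.
  + move=> i; rewrite xE; exact: (i_val I).
  + move=> r hr; have [ds [sz c]] := i_chain I hr.
    rewrite -sz; apply: (@phi_ge _ 0).
    * apply: (@decomp_ex _ (fun i => X L i == 2 ^ r) b) => i; rewrite xE.
      split.
      -- move=> [h1 h2]; split=> //; last by rewrite h2.
         have hx' : X L i != 0 by rewrite h2 expn_eq0.
         by have /andP [] := X_range I hx'.
      -- by case=> h1 _ /eqP h2.
    * apply: chainP_mono c => // y [y0 hy]; split=> //; by rewrite xE.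
Qed.
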